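(* The normalized geometric discord $\mathcal{D}$ does not attain a maximum on the set of two-qubit states of rank $2$; that is, there is no rank-$2$ two-qubit state $\rho_0$ with $\mathcal{D}(\rho_0)\ge\mathcal{D}(\rho)$ for all rank-$2$ two-qubit states $\rho$.
   Context: A two-qubit state is a density matrix (positive semidefinite, trace one) on $\mathbb{C}^2\otimes\mathbb{C}^2$, and its rank is its rank as a matrix. The set $\Omega_0$ of classical-quantum states consists of states $\sum_k p_k|\psi_k\rangle\langle\psi_k|\otimes\rho_k^B$ with $\{|\psi_k\rangle\}$ an orthonormal basis of the first qubit, $p_k\ge0$ summing to one, and $\rho_k^B$ states of the second qubit. The normalized geometric discord is $\mathcal{D}(\rho)=2\min_{\chi\in\Omega_0}\operatorname{Tr}\big((\rho-\chi)^\dagger(\rho-\chi)\big)$; its maximum over all two-qubit states is $1$. *)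

(* Defs.v *)
From HB Require Import structures.
From mathcomp Require Import all_boot all_order all_algebra.
From mathcomp Require Import classical_sets reals.
From mathcomp Require Import complex mxtens.
Set Implicit Arguments. Unset Strict Implicit. Unset Printing Implicit Defensive.
Import Order.TTheory GRing.Theory Num.Theory.
Local Open Scope ring_scope.
Local Open Scope classical_set_scope.

Section QDefs.
Variable R : realType.
Local Notation C := R[i].

Definition adj m n (A : 'M[C]_(m, n)) : 'M[C]_(n, m) := (map_mx Num.conj A)^T.

(* Kronecker (tensor) product; index (i,j) of C^m (x) C^n is i*n + j *)
Definition kron m1 n1 m2 n2 (A : 'M[C]_(m1, n1)) (B : 'M[C]_(m2, n2))
  : 'M[C]_(m1 * m2, n1 * n2) :=
  \matrix_(k, l) (A (mxtens_unindex k).1 (mxtens_unindex l).1 *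
                  B (mxtens_unindex k).2 (mxtens_unindex l).2).

Definition psd n (A : 'M[C]_n) : Prop :=
  adj A = A /\ forall v : 'cV[C]_n, 0 <= (adj v *m A *m v) 0 0.

Definition is_state n (A : 'M[C]_n) : Prop := psd A /\ \tr A = 1.

Definition two_qubit_state (rho : 'M[C]_(2 * 2)) : Prop := is_state rho.

Definition cq_state (chi : 'M[C]_(2 * 2)) : Prop :=
  exists (psi : 'I_2 -> 'cV[C]_2) (p : 'I_2 -> R) (rhoB : 'I_2 -> 'M[C]_2),
    (forall j k : 'I_2, (adj (psi j) *m psi k) 0 0 = (j == k)%:R) /\
    (forall k, 0 <= p k) /\ \sum_(k < 2) p k = 1 /\
    (forall k, is_state (rhoB k)) /\
    chi = \sum_(k < 2) (real_complex R (p k)) *: kron (psi k *m adj (psi k)) (rhoB k).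

Definition hs2 (rho chi : 'M[C]_(2 * 2)) : R :=
  complex.Re (\tr (adj (rho - chi) *m (rho - chi))).

(* normalized geometric discord (the min over compact Omega_0 is an inf) *)
Definition geo_discord (rho : 'M[C]_(2 * 2)) : R :=
  2 * inf [set hs2 rho chi | chi in cq_state].

End QDefs.

(* Main.v *)
Require Import Defs.
From HB Require Import structures.
From mathcomp Require Import all_boot all_order all_algebra.
From mathcomp Require Import classical_sets reals.
From mathcomp Require Import complex mxtens.
From mathcomp Require Import ring lra.
Import Order.TTheory GRing.Theory Num.Theory.
Local Open Scope ring_scope.
Set Implicit Arguments. Unset Strict Implicit. Unset Printing Implicit Defensive.

Section A.
Variable R : realType.
Local Notation C := R[i].
Local Notation rc := (real_complex R).

Lemma conjE (x : C) : Num.conj x = conjc x.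
Proof.
have [->|nz] := eqVneq x 0; first by rewrite conjC0 /= oppr0.
apply: (mulfI nz). rewrite -sqr_normc.
have := sqr_normc x. rewrite /=. move=> ->. done.
Qed.

Lemma conjR (a : R) : Num.conj (a%:C)%C = (a%:C)%C :> C.
Proof. by rewrite conjE /= oppr0. Qed.

Lemma adjE m n (A : 'M[C]_(m,n)) i j : adj A i j = Num.conj (A j i).
Proof. by rewrite !mxE. Qed.

Lemma adjK m n (A : 'M[C]_(m,n)) : adj (adj A) = A.
Proof. by apply/matrixP => i j; rewrite !adjE conjCK. Qed.

Lemma adjD m n (A B : 'M[C]_(m,n)) : adj (A + B) = adj A + adj B.
Proof. by apply/matrixP => i j; rewrite !mxE rmorphD. Qed.

Lemma adjN m n (A : 'M[C]_(m,n)) : adj (- A) = - adj A.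
Proof. by apply/matrixP => i j; rewrite !mxE rmorphN. Qed.

Lemma adjZ m n (c : C) (A : 'M[C]_(m,n)) : adj (c *: A) = Num.conj c *: adj A.
Proof. by apply/matrixP => i j; rewrite !mxE rmorphM. Qed.

Lemma adjM m n p (A : 'M[C]_(m,n)) (B : 'M[C]_(n,p)) : adj (A *m B) = adj B *m adj A.
Proof.
apply/matrixP => i j; rewrite !mxE rmorph_sum; apply: eq_bigr => k _.
by rewrite !mxE rmorphM mulrC.
Qed.

Definition bf n (u : 'cV[C]_n) (A : 'M[C]_n) (v : 'cV[C]_n) : C := (adj u *m A *m v) 0 0.

Lemma bfDl n (u1 u2 v : 'cV[C]_n) A : bf (u1 + u2) A v = bf u1 A v + bf u2 A v.
Proof. by rewrite /bf adjD !mulmxDl mxE. Qed.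
Lemma bfDr n (u v1 v2 : 'cV[C]_n) A : bf u A (v1 + v2) = bf u A v1 + bf u A v2.
Proof. by rewrite /bf !mulmxDr mxE. Qed.
Lemma bfZl n (c : C) (u v : 'cV[C]_n) A : bf (c *: u) A v = Num.conj c * bf u A v.
Proof. by rewrite /bf adjZ -!scalemxAl mxE. Qed.
Lemma bfZr n (c : C) (u v : 'cV[C]_n) A : bf u A (c *: v) = c * bf u A v.
Proof. by rewrite /bf -!scalemxAr mxE. Qed.
Lemma bf_conj n (u v : 'cV[C]_n) A : adj A = A -> Num.conj (bf u A v) = bf v A u.
Proof.
by move=> hA; rewrite /bf -adjE !adjM adjK hA mulmxA.
Qed.

Definition ev n (i : 'I_n) : 'cV[C]_n := delta_mx i 0.

Lemma bf_ev n (A : 'M[C]_n) i j : bf (ev i) A (ev j) = A i j.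
Proof.
rewrite /bf /ev !mxE (bigD1 j) //= big1 ?addr0.
  rewrite !mxE eqxx /= mulr1 (bigD1 i) //= big1 ?addr0.
    by rewrite !mxE !eqxx /= conjC1 mul1r.
  by move=> k /negbTE nk; rewrite !mxE nk /= conjC0 mul0r.
by move=> k /negbTE nk; rewrite !mxE nk /= mulr0.
Qed.


Lemma bf_expand n (u v : 'cV[C]_n) A x y :
  bf (x *: u + y *: v) A (x *: u + y *: v) =
  Num.conj x * x * bf u A u + Num.conj x * y * bf u A v +
  Num.conj y * x * bf v A u + Num.conj y * y * bf v A v.
Proof. rewrite !bfDl !bfDr !bfZl !bfZr; ring. Qed.

Definition psdC n (A : 'M[C]_n) := adj A = A /\ forall v : 'cV[C]_n, 0 <= bf v A v.

Lemma psdP n (A : 'M[C]_n) : psd A -> psdC A.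
Proof. by []. Qed.

Lemma ge0_real (x : C) : 0 <= x -> x = real_complex R (complex.Re x).
Proof. by case: x => a b; rewrite lecE /= => /andP[/eqP -> _]. Qed.

Lemma real_CS (a d m : R) : 0 <= a -> 0 <= d -> 0 <= m ->
  0 <= d * (a * d - m) -> 0 <= a * (a * d - m) -> 0 <= a - 2 * m + m * d ->
  m <= a * d.
Proof.
move=> ha hd hm h1 h2 h3.
have [a0|apos] := eqVneq a 0.
  have [d0|dpos] := eqVneq d 0.
    by move: h3; rewrite a0 d0; lra.
  have dp : 0 < d by rewrite lt_def dpos hd.
  by rewrite -subr_ge0 -(pmulr_rge0 _ dp).
have ap : 0 < a by rewrite lt_def apos ha.
by rewrite -subr_ge0 -(pmulr_rge0 _ ap).
Qed.

Lemma conjN' (x : C) : Num.conj (- x) = - Num.conj x.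
Proof. exact: rmorphN. Qed.
Lemma conjM' (x y : C) : Num.conj (x * y) = Num.conj x * Num.conj y.
Proof. exact: rmorphM. Qed.
Lemma conjD' (x y : C) : Num.conj (x + y) = Num.conj x + Num.conj y.
Proof. exact: rmorphD. Qed.
Lemma conjB' (x y : C) : Num.conj (x - y) = Num.conj x - Num.conj y.
Proof. exact: rmorphB. Qed.

Lemma geE (x y : R) : x = y -> 0 <= x -> 0 <= y.
Proof. by move=> ->. Qed.

Lemma CS n (A : 'M[C]_n) (u v : 'cV[C]_n) : psdC A ->
  bf u A v * bf v A u <= bf u A u * bf v A v.
Proof.
case=> hA hq.
have ha := hq u; have hd := hq v.
set b := bf u A v.
have hb : bf v A u = Num.conj b by rewrite /b bf_conj.
have hm : 0 <= b * Num.conj b := mul_conjC_ge0 b.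
have h1 := hq (bf v A v *: u + (- Num.conj b) *: v).
have h2 := hq (b *: u + (- bf u A u) *: v).
have h3 := hq (1 *: u + (- Num.conj b) *: v).
rewrite !bf_expand hb in h1 h2 h3.
rewrite hb; move: h1 h2 h3 ha hd; rewrite -/b; clear hb hm hq.
move: (bf u A u) (bf v A v) b => [a1 a2] [d1 d2] [b1 b2].
rewrite !lecE /= => /andP[/eqP h1i h1] /andP[/eqP h2i h2] /andP[/eqP h3i h3]
  /andP[/eqP hai ha'] /andP[/eqP hdi hd'].
subst a2 d2; apply/andP; split; first by apply/eqP; ring.
apply: (@le_trans _ _ (b1 * b1 + b2 * b2)); first by rewrite le_eqVlt; apply/orP; left; apply/eqP; ring.
rewrite mulr0 subr0; apply: real_CS => //.
- by rewrite addr_ge0 // -expr2 sqr_ge0.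
- by apply: geE h1; ring.
- by apply: geE h2; ring.
- by apply: geE h3; ring.
Qed.

Lemma hermE n (A : 'M[C]_n) : adj A = A -> forall i j, Num.conj (A i j) = A j i.
Proof. by move=> hA i j; rewrite -adjE hA. Qed.

Lemma trM n (A B : 'M[C]_n) : \tr (A *m B) = \sum_i \sum_j A i j * B j i.
Proof. by rewrite /mxtrace; apply: eq_bigr => i _; rewrite mxE. Qed.

Lemma ge0_le0 (z : C) : 0 <= z -> complex.Re z <= 0 -> z = 0.
Proof.
case: z => a b; rewrite lecE /= => /andP[/eqP hb0 ha] /= hb'.
have ha0 : a = 0 by apply/eqP; rewrite eq_le; apply/andP; split.
by rewrite ha0 hb0.
Qed.

Lemma purity_lt1 n (rho : 'M[C]_n) : is_state rho -> (1 < \rank rho)%N ->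
  complex.Re (\tr (rho *m rho)) < 1.
Proof.
case=> hps htr hrk; have hpsd := psdP hps; case: (hpsd) => hA hq.
have hh := hermE hA.
rewrite ltNge; apply/negP => hP.
pose m i j := rho i i * rho j j - rho i j * rho j i.
have hm : forall i j, 0 <= m i j.
  move=> i j; rewrite subr_ge0 /m; have := CS (ev i) (ev j) hpsd.
  by rewrite !bf_ev.
have hS : \sum_i \sum_j m i j = 1 - \tr (rho *m rho).
  have -> : (1 : C) = \tr rho * \tr rho by rewrite htr mulr1.
  rewrite trM {1 2}/mxtrace mulr_suml -sumrB; apply: eq_bigr => i _.
  by rewrite mulr_sumr -sumrB.
have hS0 : \sum_i \sum_j m i j = 0.
  apply: ge0_le0; first by apply: sumr_ge0 => i _; apply: sumr_ge0.
  by rewrite hS raddfB /= subr_le0.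
have hm0 : forall i j, m i j = 0.
  move=> i j; move/psumr_eq0P: hS0 => /(_ (fun i _ => sumr_ge0 _ (fun j _ => hm i j)) i isT).
  by move/psumr_eq0P => /(_ (fun j _ => hm i j) j isT).
have [k hk] : exists k, rho k k != 0.
  apply/existsP; apply: contraTT isT => /existsPn hall.
  have : \tr rho = 0 by rewrite /mxtrace big1 // => i _; apply/eqP; rewrite -[_ == _]negbK hall.
  by rewrite htr => /eqP; rewrite oner_eq0.
have hent : forall i j, rho j i = rho j k * (rho k k)^-1 * rho k i.
  move=> i j.
  pose v := rho k k *: ev i + (- rho k i) *: ev k.
  have hv : bf v rho v = 0.
    rewrite /v bf_expand !bf_ev conjN' !hh.
    have := hm0 i k; rewrite /m => e.
    by rewrite -[0](mulr0 (rho k k)) -e; ring.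
  have := CS (ev j) v hpsd; rewrite hv mulr0 -(bf_conj (ev j) v hA).
  set z := bf (ev j) rho v => hz.
  have : z * Num.conj z == 0 by rewrite eq_le hz mul_conjC_ge0.
  rewrite mul_conjC_eq0 /z /v bfDr !bfZr !bf_ev => /eqP e.
  apply: (mulfI hk).
  have -> : rho k k * (rho j k * (rho k k)^-1 * rho k i) =
    rho j k * rho k i * (rho k k * (rho k k)^-1) by ring.
  rewrite divff // mulr1; apply/eqP; rewrite -subr_eq0; apply/eqP.
  by rewrite -[RHS]e; ring.
have : rho = col k rho *m ((rho k k)^-1 *: row k rho).
  apply/matrixP => j i; rewrite !mxE big_ord1 !mxE hent; ring.
move=> e; move: hrk; rewrite e ltnNge; apply/negP; rewrite negbK.
exact: leq_trans (mxrankM_maxl _ _) (rank_leq_col _).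
Qed.
End A.

Notation o0 := (@ord0 1).
Notation o1 := (@ord_max 1).
Definition idx (a b : 'I_2) : 'I_(2*2) := @mxtens_index 2 2 (a, b).

Lemma sum2 (V : nmodType) (F : 'I_2 -> V) : \sum_(i < 2) F i = F o0 + F o1.
Proof. rewrite big_ord_recr big_ord1 /=; congr (F _ + _); exact: val_inj. Qed.

Lemma sum4 (V : nmodType) (F : 'I_(2*2) -> V) :
  \sum_(k < 2*2) F k = \sum_(a < 2) \sum_(b < 2) F (idx a b).
Proof.
rewrite (reindex (@mxtens_index 2 2)) /=; last first.
  by exists (@mxtens_unindex 2 2) => x _; [apply: mxtens_indexK | apply: mxtens_unindexK].
by rewrite pair_big /=; apply: eq_bigr => -[a b] _.
Qed.

Section B.
Variable R : realType.
Local Notation C := R[i].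
Local Notation rc := (real_complex R).

Lemma kronE m1 n1 m2 n2 (A : 'M[C]_(m1,n1)) (B : 'M[C]_(m2,n2)) a b a' b' :
  kron A B (mxtens_index (a,b)) (mxtens_index (a',b')) = A a a' * B b b'.
Proof. by rewrite mxE !mxtens_indexK. Qed.

Definition cqm (psi : 'I_2 -> 'cV[C]_2) (p : 'I_2 -> R) (rB : 'I_2 -> 'M[C]_2) : 'M[C]_(2*2) :=
  \sum_(k < 2) rc (p k) *: kron (psi k *m adj (psi k)) (rB k).

Lemma cqmE psi p rB a b a' b' :
  cqm psi p rB (idx a b) (idx a' b') =
  \sum_(k < 2) rc (p k) * (psi k a 0 * Num.conj (psi k a' 0)) * rB k b b'.
Proof.
rewrite /cqm summxE; apply: eq_bigr => k _.
by rewrite mxE kronE mxE big_ord1 adjE mulrA.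
Qed.

Definition ip n (M N : 'M[C]_n) : R := complex.Re (\tr (adj M *m N)).

Lemma ipE n (M N : 'M[C]_n) :
  ip M N = complex.Re (\sum_i \sum_j Num.conj (M i j) * N i j).
Proof.
rewrite /ip trM exchange_big; congr complex.Re; apply: eq_bigr => i _.
by apply: eq_bigr => j _; rewrite adjE.
Qed.

Lemma ReD (x y : C) : complex.Re (x + y) = complex.Re x + complex.Re y.
Proof. by case: x; case: y. Qed.
Lemma ReN (x : C) : complex.Re (- x) = - complex.Re x.
Proof. by case: x. Qed.
Lemma ReB (x y : C) : complex.Re (x - y) = complex.Re x - complex.Re y.
Proof. by rewrite ReD ReN. Qed.
Lemma Re_sum (I : finType) (F : I -> C) : complex.Re (\sum_i F i) = \sum_i complex.Re (F i).
Proof. by apply: (big_morph _ ReD). Qed.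
Lemma ReR (x : R) : complex.Re (rc x) = x.
Proof. by []. Qed.

Lemma ReJ (z : C) : complex.Re (Num.conj z) = complex.Re z.
Proof. by rewrite conjE; case: z. Qed.

Lemma conj_sum (I : finType) (F : I -> C) : Num.conj (\sum_i F i) = \sum_i Num.conj (F i).
Proof. exact: rmorph_sum. Qed.

Lemma ipC n (M N : 'M[C]_n) : ip M N = ip N M.
Proof.
rewrite !ipE -[in LHS]ReJ conj_sum; congr complex.Re; apply: eq_bigr => i _.
rewrite conj_sum; apply: eq_bigr => j _; rewrite conjM' conjCK; ring.
Qed.

Lemma ipBB n (M N : 'M[C]_n) : ip (M - N) (M - N) = ip M M - 2 * ip M N + ip N N.
Proof.
rewrite !ipE.
have -> : \sum_i \sum_j Num.conj ((M - N) i j) * (M - N) i j =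
  \sum_i \sum_j Num.conj (M i j) * M i j - (\sum_i \sum_j Num.conj (M i j) * N i j
  + \sum_i \sum_j Num.conj (N i j) * M i j) + \sum_i \sum_j Num.conj (N i j) * N i j.
  rewrite -!big_split -sumrB -big_split /=; apply: eq_bigr => i _.
  rewrite -!big_split -sumrB -big_split /=; apply: eq_bigr => j _.
  by rewrite !mxE conjB'; ring.
rewrite !ReD ReN ReD.
have -> : complex.Re (\sum_i \sum_j Num.conj (N i j) * M i j) =
  complex.Re (\sum_i \sum_j Num.conj (M i j) * N i j).
  by rewrite -!ipE ipC.
ring.
Qed.

Lemma ip_ge0 n (M : 'M[C]_n) : 0 <= ip M M.
Proof.
rewrite ipE Re_sum sumr_ge0 // => i _; rewrite Re_sum sumr_ge0 // => j _.
by case: (M i j) => a b; rewrite conjE /=; nra.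
Qed.

Lemma ip4 (M N : 'M[C]_(2*2)) : ip M N = complex.Re (\sum_(a<2) \sum_(b<2) \sum_(a'<2) \sum_(b'<2)
   Num.conj (M (idx a b) (idx a' b')) * N (idx a b) (idx a' b')).
Proof.
rewrite ipE sum4; congr complex.Re; apply: eq_bigr => a _; apply: eq_bigr => b _.
by rewrite sum4.
Qed.

End B.

Section C3.
Variable R : realType.
Local Notation C := R[i].
Local Notation rc := (real_complex R).

Lemma realK3 (x0 x3 y1 y2 u1 v1 u2 v2 : R) :
  x0 + x3 = 1 -> u1^+ 2 + v1^+ 2 + u2^+ 2 + v2^+ 2 = 1 ->
  (2 * (x0 * (u1^+ 2 + v1^+ 2) + x3 * (u2^+ 2 + v2^+ 2) +
        2 * (y1 * (u1 * u2 + v1 * v2) - y2 * (u1 * v2 - v1 * u2))) - 1)^+ 2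
  <= 2 * (x0^+ 2 + x3^+ 2 + 2 * (y1^+ 2 + y2^+ 2)) - 1.
Proof.
move=> hx hu.
set X := u1^+ 2 + v1^+ 2 - (u2^+ 2 + v2^+ 2).
set z1 := u1 * u2 + v1 * v2. set z2 := u1 * v2 - v1 * u2.
set s := x0 - x3.
have e1 : 2 * (x0 * (u1^+ 2 + v1^+ 2) + x3 * (u2^+ 2 + v2^+ 2) +
        2 * (y1 * z1 - y2 * z2)) - 1 = s * X + 4 * (y1 * z1 - y2 * z2).
  apply: (@eq_trans _ _ (2 * (x0 * (u1^+ 2 + v1^+ 2) + x3 * (u2^+ 2 + v2^+ 2) +
        2 * (y1 * z1 - y2 * z2)) - (x0 + x3) * (u1^+ 2 + v1^+ 2 + u2^+ 2 + v2^+ 2))).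
    by rewrite hx hu mulr1.
  rewrite /s /X /z1 /z2; ring.
have e2 : 2 * (x0^+ 2 + x3^+ 2 + 2 * (y1^+ 2 + y2^+ 2)) - 1 =
   (s^+ 2 + 4 * y1^+ 2 + 4 * y2^+ 2) * (X^+ 2 + 4 * z1^+ 2 + 4 * z2^+ 2).
  have -> : X^+ 2 + 4 * z1^+ 2 + 4 * z2^+ 2 = (u1^+ 2 + v1^+ 2 + u2^+ 2 + v2^+ 2)^+ 2 by rewrite /X /z1 /z2; ring.
  rewrite hu expr1n mulr1.
  apply: (@eq_trans _ _ (2 * (x0^+ 2 + x3^+ 2 + 2 * (y1^+ 2 + y2^+ 2)) - (x0 + x3)^+ 2)).
    by rewrite hx expr1n.
  rewrite /s; ring.
rewrite e1 e2 -subr_ge0.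
have -> : (s ^+ 2 + 4 * y1 ^+ 2 + 4 * y2 ^+ 2) * (X ^+ 2 + 4 * z1 ^+ 2 + 4 * z2 ^+ 2) -
    (s * X + 4 * (y1 * z1 - y2 * z2)) ^+ 2 =
    (2 * s * z1 - 2 * y1 * X)^+ 2 + (2 * s * z2 + 2 * y2 * X)^+ 2 + (4 * y1 * z2 + 4 * y2 * z1)^+ 2.
  ring.
by rewrite !addr_ge0 // sqr_ge0.
Qed.


Lemma leE (x y x' y' : R) : x = x' -> y = y' -> x' <= y' -> x <= y.
Proof. by move=> -> ->. Qed.

Lemma bfE n (u : 'cV[C]_n) A v : bf u A v = \sum_j \sum_i Num.conj (u i 0) * A i j * v j 0.
Proof.
rewrite /bf mxE; apply: eq_bigr => j _; rewrite mxE mulr_suml.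
by apply: eq_bigr => i _; rewrite adjE.
Qed.

Lemma K3 (B : 'M[C]_2) (w : 'cV[C]_2) : is_state B ->
  \sum_a Num.conj (w a 0) * w a 0 = 1 ->
  (2 * complex.Re (bf w B w) - 1) ^+ 2 <=
     2 * complex.Re (\sum_b \sum_b' Num.conj (B b b') * B b b') - 1 /\
  0 <= complex.Re (bf w B w).
Proof.
case=> -[hA hq] htr hw.
split; last first.
  have : 0 <= bf w B w := hq w.
  by case: (bf w B w) => a b; rewrite lecE /= => /andP[].
have hh := hermE hA.
have h01 := hh o0 o1. have h00 := hh o0 o0. have h11 := hh o1 o1.
move: htr hw; rewrite bfE /mxtrace !sum2 /=.
move: h01 h00 h11.
move: (B o0 o0) (B o0 o1) (B o1 o0) (B o1 o1) (w o0 0) (w o1 0).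
move=> [a0 a0'] [b1 b2] [c1 c2] [d d'] [u1 v1] [u2 v2].
rewrite !conjE /= => h01 h00 h11.
case: h01 => e1 e2; case: h00 => e3; case: h11 => e4.
move=> /eqP; rewrite eq_complex /= => /andP[/eqP ht _].
move=> /eqP; rewrite eq_complex /= => /andP[/eqP hu _].
have a0'0 : a0' = 0 by lra.
have d'0 : d' = 0 by lra.
subst a0' d' c1 c2.
have hu' : u1 ^+ 2 + v1 ^+ 2 + u2 ^+ 2 + v2 ^+ 2 = 1 by rewrite -hu; ring.
have := realK3 b1 b2 ht hu'.
by apply: leE; ring.
Qed.
End C3.

Section K.
Variable R : realType.
Local Notation C := R[i].
Local Notation rc := (real_complex R).

Lemma ReM2 (a : R) (z : C) : complex.Re (rc a * rc a * z) = a ^+ 2 * complex.Re z.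
Proof. by case: z => x y /=; ring. Qed.

Lemma K1 (psi : 'I_2 -> 'cV[C]_2) p rB :
  (forall j k, (adj (psi j) *m psi k) 0 0 = (j == k)%:R) ->
  ip (cqm psi p rB) (cqm psi p rB) =
  p o0 ^+ 2 * complex.Re (\sum_b \sum_b' Num.conj (rB o0 b b') * rB o0 b b') +
  p o1 ^+ 2 * complex.Re (\sum_b \sum_b' Num.conj (rB o1 b b') * rB o1 b b').
Proof.
move=> hon.
pose G j k := \sum_a Num.conj (psi j a 0) * psi k a 0.
have hG : forall j k, G j k = (j == k)%:R.
  move=> j k; rewrite -hon mxE /G; apply: eq_bigr => a _; by rewrite adjE.
pose H j k := \sum_b \sum_b' Num.conj (rB j b b') * rB k b b'.
have E : ip (cqm psi p rB) (cqm psi p rB) = complex.Re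
  (\sum_j \sum_k rc (p j) * rc (p k) * G j k * Num.conj (G j k) * H j k).
  rewrite ip4; congr complex.Re.
  rewrite /G /H !sum2 !cqmE !sum2.
  rewrite !conjD' !conjM' !conjR !conjCK.
  ring.
rewrite E !sum2 !hG /= conjC1 conjC0 !mulr0 !mul0r !add0r !addr0 !mulr1 ReD !ReM2.
by rewrite /H !sum2.
Qed.

Definition Phi : 'M[C]_(2*2) := \matrix_(i, j)
  ((((mxtens_unindex i).1 == (mxtens_unindex i).2) &&
    ((mxtens_unindex j).1 == (mxtens_unindex j).2))%:R / 2).

Lemma PhiE a b a' b' : Phi (idx a b) (idx a' b') = ((a == b) && (a' == b'))%:R / 2.
Proof. by rewrite mxE /idx !mxtens_indexK. Qed.

Lemma conjPhi i j : Num.conj (Phi i j) = Phi i j.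
Proof. by rewrite mxE conjM' fmorphV /= !conjC_nat. Qed.

Lemma Re_half (z : C) : complex.Re (z / 2) = complex.Re z / 2.
Proof.
have -> : (2 : C)^-1 = rc (2^-1) by rewrite fmorphV /= rmorph_nat.
by case: z => x y /=; ring.
Qed.

Lemma K2 (psi : 'I_2 -> 'cV[C]_2) p rB :
  ip Phi (cqm psi p rB) = complex.Re
   (rc (p o0) * bf (map_mx Num.conj (psi o0)) (rB o0) (map_mx Num.conj (psi o0)) +
    rc (p o1) * bf (map_mx Num.conj (psi o1)) (rB o1) (map_mx Num.conj (psi o1))) / 2.
Proof.
rewrite ip4 -Re_half; congr complex.Re.
rewrite !sum2 !conjPhi !PhiE !cqmE !bfE !sum2 /= !mxE !conjCK.
ring.
Qed.

Lemma realK4 (p0 p1 Q0 Q1 N0 N1 : R) : 0 <= p0 -> 0 <= p1 -> p0 + p1 = 1 ->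
  (2 * Q0 - 1) ^+ 2 <= 2 * N0 - 1 -> (2 * Q1 - 1) ^+ 2 <= 2 * N1 - 1 ->
  - 1 / 2 <= p0 ^+ 2 * N0 + p1 ^+ 2 * N1 - (p0 * Q0 + p1 * Q1).
Proof.
move=> h0 h1 hs hn0 hn1.
have a0 : p0 ^+ 2 * (1 + (2 * Q0 - 1) ^+ 2) / 2 <= p0 ^+ 2 * N0.
  have : 0 <= p0 ^+ 2 by exact: sqr_ge0.
  nra.
have a1 : p1 ^+ 2 * (1 + (2 * Q1 - 1) ^+ 2) / 2 <= p1 ^+ 2 * N1.
  have : 0 <= p1 ^+ 2 by exact: sqr_ge0.
  nra.
have b0 : 0 <= (p0 * (2 * Q0 - 1) - 1/2) ^+ 2 by exact: sqr_ge0.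
have b1 : 0 <= (p1 * (2 * Q1 - 1) - 1/2) ^+ 2 by exact: sqr_ge0.
have c : 0 <= (p0 - p1) ^+ 2 by exact: sqr_ge0.
nra.
Qed.

Lemma ReRM (a : R) (z : C) : complex.Re (rc a * z) = a * complex.Re z.
Proof. by case: z => x y /=; ring. Qed.

Lemma lemK (psi : 'I_2 -> 'cV[C]_2) p rB :
  (forall j k, (adj (psi j) *m psi k) 0 0 = (j == k)%:R) ->
  (forall k, 0 <= p k) -> \sum_k p k = 1 -> (forall k, is_state (rB k)) ->
  - 1 / 2 <= ip (cqm psi p rB) (cqm psi p rB) - 2 * ip Phi (cqm psi p rB).
Proof.
move=> hon hp hs hst.
rewrite K1 // K2 ReD !ReRM.
have hw : forall k, \sum_a Num.conj (map_mx Num.conj (psi k) a 0) * map_mx Num.conj (psi k) a 0 = 1.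
  move=> k; rewrite -[RHS](_ : (k == k)%:R = 1); last by rewrite eqxx.
  rewrite -hon mxE; apply: eq_bigr => a _; rewrite !mxE conjCK mulrC //.
have [h0 _] := K3 (hst o0) (hw o0).
have [h1 _] := K3 (hst o1) (hw o1).
rewrite sum2 in hs.
have := realK4 (hp o0) (hp o1) hs h0 h1.
apply: leE => //; field; by rewrite ?pnatr_eq0.
Qed.
End K.

Section G.
Variable R : realType.
Local Notation C := R[i].
Local Notation rc := (real_complex R).

Definition Pm (psi : 'cV[C]_2) : 'M[C]_2 := psi *m adj psi.
Lemma PmE psi a a' : Pm psi a a' = psi a 0 * Num.conj (psi a' 0).
Proof. by rewrite mxE big_ord1 adjE. Qed.

Definition blk (rho : 'M[C]_(2*2)) (P : 'M[C]_2) : 'M[C]_2 :=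
  \matrix_(b, b') \sum_a \sum_a' P a' a * rho (idx a b) (idx a' b').

Lemma blkE rho P b b' : blk rho P b b' = \sum_a \sum_a' P a' a * rho (idx a b) (idx a' b').
Proof. by rewrite mxE. Qed.

Definition Dmat (rho : 'M[C]_(2*2)) (P : 'I_2 -> 'M[C]_2) : 'M[C]_(2*2) :=
  \matrix_(i, j) \sum_k P k (mxtens_unindex i).1 (mxtens_unindex j).1 *
     blk rho (P k) (mxtens_unindex i).2 (mxtens_unindex j).2.

Lemma DmatE rho P a b a' b' :
  Dmat rho P (idx a b) (idx a' b') = \sum_k P k a a' * blk rho (P k) b b'.
Proof. by rewrite mxE /idx !mxtens_indexK. Qed.

Definition kv (psi v : 'cV[C]_2) : 'cV[C]_(2*2) :=
  \col_i (psi (mxtens_unindex i).1 0 * v (mxtens_unindex i).2 0).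

Lemma kvE psi v a b : kv psi v (idx a b) 0 = psi a 0 * v b 0.
Proof. by rewrite mxE /idx !mxtens_indexK. Qed.

Lemma blk_bf rho psi v : bf v (blk rho (Pm psi)) v = bf (kv psi v) rho (kv psi v).
Proof.
rewrite !bfE !sum4; under [in RHS]eq_bigr => a _ do under eq_bigr => b _ do rewrite sum4.
rewrite !sum2 !blkE !sum2 !PmE !kvE !conjM'.
ring.
Qed.

Lemma blk_herm rho psi : adj rho = rho -> adj (blk rho (Pm psi)) = blk rho (Pm psi).
Proof.
move=> hA; have hh := hermE hA.
apply/matrixP => b b'; rewrite adjE !blkE !sum2 !PmE !conjD' !conjM' !conjCK !hh.
ring.
Qed.

End G.

Section H.
Variable R : realType.
Local Notation C := R[i].
Local Notation rc := (real_complex R).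

Lemma blk_psd (rho : 'M[C]_(2*2)) (psi : 'cV[C]_2) : is_state rho -> psdC (blk rho (Pm psi)).
Proof.
case=> -[hA hq] _; split; first exact: blk_herm.
by move=> v; rewrite blk_bf; apply: hq.
Qed.

Lemma psd_tr_ge0 n (B : 'M[C]_n) : psdC B -> 0 <= \tr B.
Proof.
case=> _ hq; rewrite /mxtrace sumr_ge0 // => i _.
by rewrite -bf_ev.
Qed.

Lemma psd_tr0 n (B : 'M[C]_n) : psdC B -> \tr B = 0 -> B = 0.
Proof.
move=> hB ht; case: (hB) => hA hq.
have hd : forall i, B i i = 0.
  move=> i; apply: (psumr_eq0P (P := xpredT) _ ht) => // k _.
  by rewrite -bf_ev.
apply/matrixP => i j; rewrite mxE.
have := CS (ev _ i) (ev _ j) hB; rewrite !bf_ev !hd mulr0 -(hermE hA i j).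
move=> h; have : B i j * Num.conj (B i j) == 0 by rewrite eq_le h mul_conjC_ge0.
by rewrite mul_conjC_eq0 => /eqP.
Qed.

Lemma o01 : (o0 == o1 :> 'I_2) = false. Proof. by []. Qed.
Lemma o10 : (o1 == o0 :> 'I_2) = false. Proof. by []. Qed.

Definition E00 : 'M[C]_2 := delta_mx o0 o0.

Lemma E00_state : is_state E00.
Proof.
split; last by rewrite /mxtrace sum2 !mxE !eqxx o10 /= addr0.
split.
  by apply/matrixP => i j; rewrite adjE !mxE andbC; case: (_ && _);
     rewrite /= ?conjC1 ?conjC0.
move=> v; change (0 <= bf v E00 v).
rewrite bfE !sum2 !mxE !eqxx o10 /=.
apply: (le_trans (mul_conjC_ge0 (v o0 0))); rewrite le_eqVlt; apply/orP; left; apply/eqP; ring.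
Qed.

Lemma scale_state (B : 'M[C]_2) (c : R) : psdC B -> 0 < c -> \tr B = rc c^-1 -> is_state (rc c *: B).
Proof.
move=> [hA hq] hc ht; split; last by rewrite mxtraceZ ht -rmorphM /= divff // gt_eqF.
split; first by rewrite adjZ conjR hA.
move=> v; change (0 <= bf v (rc c *: B) v).
rewrite /bf -scalemxAr -scalemxAl mxE mulr_ge0 //; first by rewrite ler0c ltW.
exact: hq.
Qed.

End H.

Section I.
Variable R : realType.
Local Notation C := R[i].
Local Notation rc := (real_complex R).

Lemma construct (rho : 'M[C]_(2*2)) (psi : 'I_2 -> 'cV[C]_2) :
  is_state rho ->
  (forall j k, (adj (psi j) *m psi k) 0 0 = (j == k)%:R) ->
  (forall a a', \sum_k psi k a 0 * Num.conj (psi k a' 0) = (a == a')%:R) ->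
  cq_state (Dmat rho (fun k => Pm (psi k))).
Proof.
move=> hst hon hcomp.
pose B k := blk rho (Pm (psi k)).
have hB k : psdC (B k) := blk_psd _ hst.
pose p k := complex.Re (\tr (B k)).
have htr k : \tr (B k) = rc (p k) := ge0_real (psd_tr_ge0 (hB k)).
have hp k : 0 <= p k.
  by have := psd_tr_ge0 (hB k); rewrite htr ler0c.
pose rB k := if p k == 0 then E00 R else rc ((p k)^-1) *: B k.
have hsc k : rc (p k) *: rB k = B k.
  rewrite /rB; case: eqP => [h0|hn].
    rewrite h0 scale0r; symmetry; apply: psd_tr0 (hB k) _; by rewrite htr h0.
  by rewrite scalerA -rmorphM /= divff ?rmorph1 ?scale1r //; apply/eqP.
have hrs k : is_state (rB k).
  rewrite /rB; case: eqP => [_|hn]; first exact: E00_state.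
  have hpk : 0 < p k by rewrite lt_def (hp k) andbT; apply/eqP.
  by apply: scale_state (hB k) _ _; rewrite ?invr_gt0 // invrK htr.
have hsum : \sum_k p k = 1.
  pose Cm a a' := \sum_k psi k a 0 * Num.conj (psi k a' 0).
  have hC : forall a a', Cm a a' = (a == a')%:R by move=> a a'; exact: hcomp.
  have E : \sum_k \tr (B k) = \sum_b \sum_a \sum_a' Cm a' a * rho (idx a b) (idx a' b).
    rewrite /B /Cm /mxtrace !sum2 !blkE !sum2 !PmE; ring.
  have E2 : \sum_k \tr (B k) = \tr rho.
    rewrite E !sum2 !hC !eqxx o01 o10 /mxtrace sum4 !sum2 /=; ring.
  have : complex.Re (\sum_k \tr (B k)) = 1 by rewrite E2; case: hst => _ ->.
  by rewrite Re_sum.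
exists psi, p, rB; split => //; split => //; split => //; split => //.
apply/matrixP => i j.
rewrite -(mxtens_unindexK i) -(mxtens_unindexK j).
case: (mxtens_unindex i) => a b; case: (mxtens_unindex j) => a' b'.
rewrite -/(idx a b) -/(idx a' b').
rewrite DmatE summxE; apply: eq_bigr => k _.
rewrite -/(B k) -(hsc k) /idx !mxE !mxtens_indexK /=; ring.
Qed.

End I.

Section J.
Variable R : realType.
Local Notation C := R[i].
Local Notation rc := (real_complex R).
Local Notation h := (rc (2^-1)).
Local Notation ii := (Complex (0:R) 1).

Definition PZc (k : 'I_2) : 'M[C]_2 := \matrix_(a, a') ((a == k) && (a' == k))%:R.
Definition PXc (k : 'I_2) : 'M[C]_2 := \matrix_(a, a') (if (a == a') || (k == o0) then h else - h).
Definition PYc (k : 'I_2) : 'M[C]_2 := \matrix_(a, a')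
  (if a == a' then h else if (a == o0) == (k == o0) then - (h * ii) else h * ii).

Definition trA (rho : 'M[C]_(2*2)) : 'M[C]_2 := \matrix_(b, b') \sum_a rho (idx a b) (idx a b').

Lemma mxsubE n (A B : 'M[C]_n) i j : (A - B) i j = A i j - B i j.
Proof. by rewrite !mxE. Qed.

Lemma trAE rho b b' : trA rho b b' = \sum_a rho (idx a b) (idx a b').
Proof. by rewrite mxE. Qed.

Definition dm (P : 'I_2 -> 'M[C]_2) (m : 'I_2 -> 'I_2 -> C) (a a' : 'I_2) : C :=
  \sum_k P k a a' * \sum_c \sum_c' P k c' c * m c c'.
Definition loc (P : 'I_2 -> 'M[C]_2) (m : 'I_2 -> 'I_2 -> C) : R :=
  complex.Re (\sum_a \sum_a' Num.conj (m a a' - dm P m a a') * (m a a' - dm P m a a')).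

Lemma loc3 (m : 'I_2 -> 'I_2 -> C) :
  loc PZc m + loc PXc m + loc PYc m =
  2 * complex.Re (\sum_a \sum_a' Num.conj (m a a') * m a a') -
  complex.Re (Num.conj (m o0 o0 + m o1 o1) * (m o0 o0 + m o1 o1)).
Proof.
rewrite /loc /dm !sum2 !mxE !eqxx ?o01 ?o10 /=.
move: (m o0 o0) (m o0 o1) (m o1 o0) (m o1 o1) => [x1 y1] [x2 y2] [x3 y3] [x4 y4].
rewrite !conjE /=.
field; by rewrite ?pnatr_eq0.
Qed.
End J.

Lemma I2P (j : 'I_2) : j = o0 \/ j = o1.
Proof. by case: j => [[|[|n]]] //= H; [left|right]; apply: val_inj. Qed.

Section M.
Variable R : realType.
Local Notation C := R[i].
Local Notation rc := (real_complex R).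
Local Notation ii := (Complex (0:R) 1).

Definition sg : R := Num.sqrt (2^-1).
Lemma sg2 : sg * sg = 2^-1.
Proof. by rewrite -expr2 sqr_sqrtr // invr_ge0 ler0n. Qed.

Definition psiZ (k : 'I_2) : 'cV[C]_2 := \col_a ((a == k)%:R).
Definition psiX (k : 'I_2) : 'cV[C]_2 :=
  \col_a (if a == o0 then rc sg else if k == o0 then rc sg else - rc sg).
Definition psiY (k : 'I_2) : 'cV[C]_2 :=
  \col_a (if a == o0 then rc sg else if k == o0 then ii * rc sg else - (ii * rc sg)).

Ltac cfin := apply/eqP; rewrite eq_complex /=; apply/andP; split; apply/eqP;
  have := sg2; nra.

Lemma onZ j k : (adj (psiZ j) *m psiZ k) 0 0 = (j == k)%:R.
Proof.
rewrite mxE sum2 !adjE !mxE.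
by case: (I2P j) => ->; case: (I2P k) => ->; rewrite ?eqxx ?o01 ?o10 /= ?conjC1 ?conjC0;
  cfin.
Qed.


Ltac c4 j k := case: (I2P j) => ->; case: (I2P k) => ->; rewrite ?eqxx ?o01 ?o10 /= ?conjC1 ?conjC0; cfin.
Ltac c8 k j l := case: (I2P k) => ->; case: (I2P j) => ->; case: (I2P l) => ->;
   rewrite ?eqxx ?o01 ?o10 /= ?conjC1 ?conjC0; cfin.

Lemma onX j k : (adj (psiX j) *m psiX k) 0 0 = (j == k)%:R.
Proof. rewrite mxE sum2 !adjE !mxE. c4 j k. Qed.
Lemma onY j k : (adj (psiY j) *m psiY k) 0 0 = (j == k)%:R.
Proof. rewrite mxE sum2 !adjE !mxE. c4 j k. Qed.
Lemma coZ a a' : \sum_k psiZ k a 0 * Num.conj (psiZ k a' 0) = (a == a')%:R.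
Proof. rewrite sum2 !mxE. c4 a a'. Qed.
Lemma coX a a' : \sum_k psiX k a 0 * Num.conj (psiX k a' 0) = (a == a')%:R.
Proof. rewrite sum2 !mxE. c4 a a'. Qed.
Lemma coY a a' : \sum_k psiY k a 0 * Num.conj (psiY k a' 0) = (a == a')%:R.
Proof. rewrite sum2 !mxE. c4 a a'. Qed.
Lemma PmZ k : Pm (psiZ k) = PZc R k.
Proof. apply/matrixP => a a'; rewrite PmE !mxE. c8 k a a'. Qed.
Lemma PmX k : Pm (psiX k) = PXc R k.
Proof. apply/matrixP => a a'; rewrite PmE !mxE. c8 k a a'. Qed.
Lemma PmY k : Pm (psiY k) = PYc R k.
Proof. apply/matrixP => a a'; rewrite PmE !mxE. c8 k a a'. Qed.
End M.

Section L.
Variable R : realType.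
Local Notation C := R[i].
Local Notation rc := (real_complex R).

Lemma entryD (rho : 'M[C]_(2*2)) P a b a' b' :
  (rho - Dmat rho P) (idx a b) (idx a' b') =
  rho (idx a b) (idx a' b') - dm P (fun c c' => rho (idx c b) (idx c' b')) a a'.
Proof.
rewrite mxsubE DmatE /dm; congr (_ - _); apply: eq_bigr => k _.
by rewrite blkE.
Qed.

Lemma ip_loc (rho : 'M[C]_(2*2)) P :
  ip (rho - Dmat rho P) (rho - Dmat rho P) =
  \sum_b \sum_b' loc P (fun a a' => rho (idx a b) (idx a' b')).
Proof.
rewrite ip4.
under eq_bigr => a _ do under eq_bigr => b _ do under eq_bigr => a' _ do
  under eq_bigr => b' _ do rewrite entryD.
rewrite /loc !Re_sum !sum2 ?Re_sum ?sum2.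
ring.
Qed.

Lemma ip_loc0 (rho : 'M[C]_(2*2)) :
  ip rho rho = \sum_b \sum_b' complex.Re (\sum_a \sum_a'
     Num.conj (rho (idx a b) (idx a' b')) * rho (idx a b) (idx a' b')).
Proof. by rewrite ip4 !Re_sum !sum2 ?Re_sum ?sum2; ring. Qed.

Lemma ip_trA (rho : 'M[C]_(2*2)) :
  ip (trA rho) (trA rho) = \sum_b \sum_b' complex.Re
     (Num.conj (rho (idx o0 b) (idx o0 b') + rho (idx o1 b) (idx o1 b')) *
        (rho (idx o0 b) (idx o0 b') + rho (idx o1 b) (idx o1 b'))).
Proof. by rewrite ipE !Re_sum !sum2 ?Re_sum ?sum2 !trAE !sum2 !ReD addrA. Qed.

Lemma sum3 (rho : 'M[C]_(2*2)) :
  ip (rho - Dmat rho (PZc R)) (rho - Dmat rho (PZc R)) +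
  ip (rho - Dmat rho (PXc R)) (rho - Dmat rho (PXc R)) +
  ip (rho - Dmat rho (PYc R)) (rho - Dmat rho (PYc R)) =
  2 * ip rho rho - ip (trA rho) (trA rho).
Proof.
rewrite !ip_loc ip_loc0 ip_trA -!big_split /= mulr_sumr -sumrB.
apply: eq_bigr => b _; rewrite -!big_split /= mulr_sumr -sumrB.
by apply: eq_bigr => b' _; rewrite loc3.
Qed.

End L.

Section N.
Variable R : realType.
Local Notation C := R[i].
Local Notation rc := (real_complex R).

Lemma eq_Dmat rho (P Q : 'I_2 -> 'M[C]_2) : (forall k, P k = Q k) -> Dmat rho P = Dmat rho Q.
Proof.
move=> hPQ; apply/matrixP => i j; rewrite !mxE; apply: eq_bigr => k _.
by rewrite hPQ.
Qed.

Lemma hs2_ge0 (rho chi : 'M[C]_(2*2)) : 0 <= hs2 rho chi.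
Proof. exact: (ip_ge0 (rho - chi)). Qed.

Lemma lbS (rho : 'M[C]_(2*2)) : has_lbound [set hs2 rho chi | chi in @cq_state R].
Proof. by exists 0 => y [chi _ <-]; apply: hs2_ge0. Qed.

Lemma inf_le_hs2 (rho chi : 'M[C]_(2*2)) : cq_state chi ->
  inf [set hs2 rho chi | chi in @cq_state R] <= hs2 rho chi.
Proof. by move=> hc; apply: (ge_inf (lbS rho)); exists chi. Qed.

Lemma trA_ge (rho : 'M[C]_(2*2)) : \tr rho = 1 -> 2^-1 <= ip (trA rho) (trA rho).
Proof.
move=> ht.
have ht' : trA rho o0 o0 + trA rho o1 o1 = 1.
  by rewrite -ht /mxtrace sum4 !sum2 !trAE !sum2; ring.
rewrite ipE !sum2; move: ht'.
move: (trA rho o0 o0) (trA rho o0 o1) (trA rho o1 o0) (trA rho o1 o1).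
move=> [x1 y1] [x2 y2] [x3 y3] [x4 y4] /eqP; rewrite eq_complex /= => /andP[/eqP hx _].
rewrite ?conjE /=.
have : 0 <= (x1 - x4) ^+ 2 by exact: sqr_ge0.
nra.
Qed.

Lemma discord_lt1 (rho : 'M[C]_(2*2)) : is_state rho -> (1 < \rank rho)%N ->
  geo_discord rho < 1.
Proof.
move=> hst hrk.
have hZ : cq_state (Dmat rho (PZc R)).
  rewrite -(eq_Dmat rho (@PmZ R)); apply: construct => //; [exact: onZ | exact: coZ].
have hX : cq_state (Dmat rho (PXc R)).
  rewrite -(eq_Dmat rho (@PmX R)); apply: construct => //; [exact: onX | exact: coX].
have hY : cq_state (Dmat rho (PYc R)).
  rewrite -(eq_Dmat rho (@PmY R)); apply: construct => //; [exact: onY | exact: coY].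
have iZ := inf_le_hs2 rho hZ. have iX := inf_le_hs2 rho hX. have iY := inf_le_hs2 rho hY.
have hs := sum3 rho.
have hp := purity_lt1 hst hrk.
have ht := trA_ge (proj2 hst).
have e : ip rho rho = complex.Re (\tr (rho *m rho)).
  by rewrite /ip; case: hst => -[-> _] _.
have iZ' : inf [set hs2 rho chi | chi in @cq_state R] <=
  ip (rho - Dmat rho (PZc R)) (rho - Dmat rho (PZc R)) := iZ.
have iX' : inf [set hs2 rho chi | chi in @cq_state R] <=
  ip (rho - Dmat rho (PXc R)) (rho - Dmat rho (PXc R)) := iX.
have iY' : inf [set hs2 rho chi | chi in @cq_state R] <=
  ip (rho - Dmat rho (PYc R)) (rho - Dmat rho (PYc R)) := iY.
rewrite /geo_discord.
move: iZ' iX' iY' hs hp ht; rewrite -e.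
move: (inf _) (ip (rho - _) _) (ip (rho - _) _) (ip (rho - _) _) (ip rho rho) (ip (trA rho) _).
move=> I a b c P T h1 h2 h3 h4 h5 h6.
have h7 : (2:R)^-1 = 1/2 by rewrite mul1r.
rewrite h7 in h6.
lra.
Qed.
End N.

Lemma idx_eq a b a' b' : (idx a b == idx a' b') = (a == a') && (b == b').
Proof.
apply/eqP/andP => [h|[/eqP -> /eqP ->] //].
have := congr1 (@mxtens_unindex 2 2) h; rewrite /idx !mxtens_indexK => -[-> ->].
by split.
Qed.

Section O.
Variable R : realType.
Local Notation C := R[i].
Local Notation rc := (real_complex R).

Definition Emat : 'M[C]_(2*2) := \matrix_(i, j) ((i == idx o0 o1) && (j == idx o0 o1))%:R.
Lemma EmatE a b a' b' : Emat (idx a b) (idx a' b') =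
  ((a == o0) && (b == o1) && (a' == o0) && (b' == o1))%:R.
Proof. by rewrite mxE !idx_eq !andbA. Qed.

Definition rho_e (e : R) : 'M[C]_(2*2) := rc (1 - e) *: Phi R + rc e *: Emat.

Lemma bfMD n (u v : 'cV[C]_n) A B : bf u (A + B) v = bf u A v + bf u B v.
Proof. by rewrite /bf mulmxDr mulmxDl mxE. Qed.
Lemma bfMZ n (u v : 'cV[C]_n) c A : bf u (c *: A) v = c * bf u A v.
Proof. by rewrite /bf -scalemxAr -scalemxAl mxE. Qed.

Lemma adjPhi : adj (Phi R) = Phi R.
Proof. by apply/matrixP => i j; rewrite adjE conjPhi !mxE andbC. Qed.
Lemma adjEmat : adj Emat = Emat.
Proof. by apply/matrixP => i j; rewrite adjE !mxE conjC_nat andbC. Qed.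

Lemma bfPhi v : bf v (Phi R) v =
  Num.conj (v (idx o0 o0) 0 + v (idx o1 o1) 0) * (v (idx o0 o0) 0 + v (idx o1 o1) 0) / 2.
Proof.
rewrite bfE sum4 !sum2 sum4 !sum2 !sum4 !sum2 !PhiE !eqxx ?o01 ?o10 /= conjD'.
ring.
Qed.

Lemma bfEmat v : bf v Emat v = Num.conj (v (idx o0 o1) 0) * v (idx o0 o1) 0.
Proof.
rewrite bfE sum4 !sum2 sum4 !sum2 !sum4 !sum2 !EmatE !eqxx ?o01 ?o10 /=.
ring.
Qed.

Lemma trPhi : \tr (Phi R) = 1.
Proof. rewrite /mxtrace sum4 !sum2 !PhiE !eqxx ?o01 ?o10 /=; field; by rewrite ?pnatr_eq0. Qed.
Lemma trEmat : \tr Emat = 1.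
Proof. rewrite /mxtrace sum4 !sum2 !EmatE !eqxx ?o01 ?o10 /=; ring. Qed.

Lemma rho_state (e : R) : 0 <= e <= 1 -> is_state (rho_e e).
Proof.
move=> /andP[h0 h1]; split; last first.
  by rewrite /rho_e mxtraceD !mxtraceZ trPhi trEmat !mulr1 -rmorphD /= subrK.
split.
  by rewrite /rho_e adjD !adjZ !conjR adjPhi adjEmat.
move=> v; change (0 <= bf v (rho_e e) v).
rewrite /rho_e bfMD !bfMZ bfPhi bfEmat.
rewrite addr_ge0 // mulr_ge0 //.
- by rewrite ler0c subr_ge0.
- by rewrite mulr_ge0 ?invr_ge0 ?ler0n // mulrC mul_conjC_ge0.
- by rewrite ler0c.
- by rewrite mulrC mul_conjC_ge0.
Qed.
End O.

Section Q.
Variable R : realType.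
Local Notation C := R[i].
Local Notation rc := (real_complex R).

Lemma ipDl n (M N K : 'M[C]_n) : ip (M + N) K = ip M K + ip N K.
Proof.
rewrite !ipE -ReD -big_split; congr complex.Re; apply: eq_bigr => i _.
by rewrite -big_split; apply: eq_bigr => j _; rewrite mxE conjD' mulrDl.
Qed.

Lemma ipZl n (a : R) (M K : 'M[C]_n) : ip (rc a *: M) K = a * ip M K.
Proof.
rewrite !ipE -ReRM mulr_sumr; congr complex.Re; apply: eq_bigr => i _.
by rewrite mulr_sumr; apply: eq_bigr => j _; rewrite mxE conjM' conjR mulrA.
Qed.

Lemma ipPP : ip (Phi R) (Phi R) = 1.
Proof.
rewrite ip4 !sum2 !PhiE !eqxx ?o01 ?o10.
rewrite (_ : (2 : C)^-1 = rc (2^-1)); last by rewrite fmorphV /= rmorph_nat.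
rewrite /= ?conjE /=. field. by rewrite ?pnatr_eq0.
Qed.


Lemma ipPE : ip (Phi R) (Emat R) = 0.
Proof.
rewrite ip4 !sum2 !PhiE !EmatE !eqxx ?o01 ?o10.
rewrite (_ : (2 : C)^-1 = rc (2^-1)); last by rewrite fmorphV /= rmorph_nat.
rewrite /= ?conjE /=. ring.
Qed.

Lemma ipEE : ip (Emat R) (Emat R) = 1.
Proof.
rewrite ip4 !sum2 !EmatE !eqxx ?o01 ?o10 /= ?conjE /=. ring.
Qed.

Lemma ipDr n (M N K : 'M[C]_n) : ip K (M + N) = ip K M + ip K N.
Proof. by rewrite ipC ipDl !(ipC K). Qed.
Lemma ipZr n (a : R) (M K : 'M[C]_n) : ip K (rc a *: M) = a * ip K M.
Proof. by rewrite ipC ipZl ipC. Qed.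

Lemma hs2_bound (e : R) chi0 : 0 <= e <= 1 -> cq_state chi0 ->
  1 / 2 - 5 / 2 * e <= hs2 (rho_e e) chi0.
Proof.
move=> /andP[h0 h1] [psi [p [rB [hon [hp [hs [hst ->]]]]]]].
have hK := lemK hon hp hs hst.
set X := \sum_(k < 2) _.
change X with (cqm psi p rB).
set chi := cqm psi p rB.
have e1 : hs2 (rho_e e) chi = ip (rho_e e - chi) (rho_e e - chi) by [].
rewrite e1 ipBB /rho_e !ipDl !ipDr !ipZl !ipZr ipPP ipPE ipEE (ipC (Emat R) (Phi R)) ipPE.
have hE := ip_ge0 ((Emat R) - chi); rewrite ipBB ipEE in hE.
move: hK hE; move: (ip chi chi) (ip (Phi R) chi) (ip (Emat R) chi) => cc pc ec hK hE.
have hA : 0 <= e * (1 - 2 * ec + cc) by rewrite mulr_ge0.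
have hB : 0 <= (1 - e) * (cc - 2 * pc + 1 / 2).
  by rewrite mulr_ge0 // ?subr_ge0 //; lra.
nra.
Qed.
End Q.

Section S.
Variable R : realType.
Local Notation C := R[i].
Local Notation rc := (real_complex R).

Definition uu (i : 'I_(2*2)) : C := ((i == idx o0 o0) || (i == idx o1 o1))%:R.
Definition ww (i : 'I_(2*2)) : C := (i == idx o0 o1)%:R.

Definition Um : 'M[C]_(2*2, 2) := \matrix_(i, j) (if j == o0 then uu i else ww i).
Definition Vm (e : R) : 'M[C]_(2, 2*2) :=
  \matrix_(j, i) (if j == o0 then rc (1 - e) * 2^-1 * uu i else rc e * ww i).
Definition Xm : 'M[C]_(2, 2*2) := \matrix_(j, i) (if j == o0 then 2^-1 * uu i else ww i).
Definition Ym (e : R) : 'M[C]_(2*2, 2) :=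
  \matrix_(i, j) (if j == o0 then rc ((1 - e)^-1) * uu i else rc (e^-1) * ww i).

Lemma split4 (P : 'I_(2*2) -> Prop) : (forall a b, P (idx a b)) -> forall i, P i.
Proof. by move=> h i; rewrite -(mxtens_unindexK i); case: (mxtens_unindex i) => a b; apply: h. Qed.

Lemma unidx a b : mxtens_unindex (idx a b) = (a, b).
Proof. exact: mxtens_indexK. Qed.

Lemma rhoUV e : rho_e e = Um *m Vm e.
Proof.
apply/matrixP; apply: split4 => a b; apply: split4 => a' b'.
rewrite /rho_e !mxE sum2 !mxE /uu /ww !unidx !idx_eq /=.
by case: (I2P a) => ->; case: (I2P b) => ->; case: (I2P a') => ->; case: (I2P b') => ->;
  rewrite ?eqxx ?o01 ?o10 /=; ring.
Qed.


Lemma XU : Xm *m Um = 1%:M.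
Proof.
apply/matrixP => j j'; rewrite !mxE sum4 !sum2 !mxE /uu /ww !idx_eq.
by case: (I2P j) => ->; case: (I2P j') => ->; rewrite ?eqxx ?o01 ?o10 /=; field.
Qed.

Lemma VY (e : R) : 0 < e < 1 -> Vm e *m Ym e = 1%:M.
Proof.
move=> /andP[h0 h1].
have n1 : rc (1 - e) != 0 by rewrite (inj_eq (@complexI R)) subr_eq0 eq_sym lt_eqF.
have n2 : rc e != 0 by rewrite (inj_eq (@complexI R)) gt_eqF.
apply/matrixP => j j'; rewrite !mxE sum4 !sum2 !mxE /uu /ww !idx_eq.
rewrite !fmorphV.
case: (I2P j) => ->; case: (I2P j') => ->; rewrite ?eqxx ?o01 ?o10 /=; field;
  by apply/eqP => /(congr1 (@complex.Re R)) /=; lra.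
Qed.

Lemma rank_rho (e : R) : 0 < e < 1 -> \rank (rho_e e) = 2%N.
Proof.
move=> he; apply/eqP; rewrite eqn_leq; apply/andP; split.
  by rewrite rhoUV (leq_trans (mxrankM_maxl _ _)) // rank_leq_col.
have : (Xm *m rho_e e) *m Ym e = 1%:M by rewrite rhoUV mulmxA XU mul1mx VY.
move=> h; have := mxrankM_maxl (Xm *m rho_e e) (Ym e); rewrite h mxrank1 => h2.
exact: (leq_trans h2 (mxrankM_maxr _ _)).
Qed.
End S.

Section T.
Variable R : realType.
Local Notation C := R[i].
Local Open Scope classical_set_scope.

Lemma cq_nonempty (rho : 'M[C]_(2*2)) : is_state rho ->
  [set hs2 rho chi | chi in @cq_state R] !=set0.
Proof.
move=> hst; exists (hs2 rho (Dmat rho (PZc R))); exists (Dmat rho (PZc R)) => //.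
rewrite -(eq_Dmat rho (@PmZ R)); apply: construct => //; [exact: onZ | exact: coZ].
Qed.

Lemma discord_ge0 (rho : 'M[C]_(2*2)) : is_state rho -> 0 <= geo_discord rho.
Proof.
move=> hst; rewrite /geo_discord mulr_ge0 //.
by apply: lb_le_inf (cq_nonempty hst) _ => y [chi _ <-]; apply: hs2_ge0.
Qed.

Lemma discord_rho_ge (e : R) : 0 < e < 1 -> 1 - 5 * e <= geo_discord (rho_e e).
Proof.
move=> /andP[h0 h1].
have hst : is_state (rho_e e) by apply: rho_state; rewrite !ltW.
have : 1 / 2 - 5 / 2 * e <= inf [set hs2 (rho_e e) chi | chi in @cq_state R].
  apply: lb_le_inf (cq_nonempty hst) _ => y [chi hc <-].
  by apply: hs2_bound => //; rewrite !ltW.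
rewrite /geo_discord; lra.
Qed.

End T.

Theorem proposition3 (R : realType) :
  ~ exists rho0 : 'M[R[i]]_(2 * 2),
      two_qubit_state rho0 /\ \rank rho0 = 2%N /\
      forall rho : 'M[R[i]]_(2 * 2),
        two_qubit_state rho -> \rank rho = 2%N ->
        geo_discord rho <= geo_discord rho0.
Proof.
move=> [rho0 [hst [hrk hmax]]].
have hd := discord_lt1 hst (eq_leq (esym hrk)).
have hd0 := discord_ge0 hst.
move: hd hd0 hmax; set D := geo_discord rho0 => hd hd0 hmax.
pose e := (1 - D) / 10.
have he : 0 < e < 1 by apply/andP; split; rewrite /e; lra.
have he' : 0 <= e <= 1 by apply/andP; split; rewrite /e; lra.
have h1 := hmax (rho_e e) (rho_state he') (rank_rho he).
have h2 := discord_rho_ge he.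
move: h1 h2; rewrite /e; lra.
Qed.
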